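(* Let $H$ be a graph without isolated vertices, let $x$ and $y$ be adjacent vertices of degree 2 in $H$, and let $x'$ and $y'$ be the vertices such that $N_H(x)\setminus\{y\}=\{x'\}$ and $N_H(y)\setminus\{x\}=\{y'\}$. If the sets $N_H(x')\setminus\{x,y\}$ and $N_H(y')\setminus\{x,y\}$ are nonempty, then the 2-subdivision graph $S_2(H)$ is a DPDP-graph but not a minimal DPDP-graph.
   Context: Graphs are finite and may have multiple edges and loops. A leaf is a vertex of degree one. A set $D\subseteq V(G)$ is dominating if every vertex outside $D$ has a neighbor in $D$; $P$ is paired-dominating if it is dominating and the subgraph induced by $P$ has a perfect matching. A DPDP-graph is a graph $G$ admitting disjoint sets $D,P$ with $V(G)=D\cup P$, $D$ dominating and $P$ paired-dominating; a minimal DPDP-graph is a DPDP-graph no proper spanning subgraph of which is a DPDP-graph. 2-subdivision graph: for a graph $H$ with no isolated vertex, set of leaves $L_H$, and $\alpha:L_H\to\mathbb{N}=\{1,2,\dots\}$, $S_2(H)$ has vertex set $(V_H\setminus L_H)\cup\{(v,i): v\in L_H, 1\le i\le \alpha(v)\}$ together with two new vertices for each edge $e$ of $H$ ($u_e,v_e$ if $e$ joins $u\ne v$; $v_e^1,v_e^2$ if $e$ is a loop at $v$). Its edges are: the edge joining the two new vertices of each $e$; for $v\in V_H\setminus L_H$, $vv_e$ for each non-loop edge $e$ at $v$ and $vv_e^1,vv_e^2$ for each loop $e$ at $v$; for $v\in L_H$ with incident edge $e$, the edges $v_e(v,i)$, $1\le i\le\alpha(v)$. The claim holds for any choice of $\alpha$.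 *)

(* Defs.v *)
From HB Require Import structures.
From mathcomp Require Import all_boot.
Set Implicit Arguments.
Unset Strict Implicit.
Unset Printing Implicit Defensive.

Section SimpleGraph.
Variable T : finType.

Definition dominating (g : rel T) (D : {set T}) : Prop :=
  forall v, v \notin D -> exists2 u, u \in D & g v u.

Definition induced_perfect_matching (g : rel T) (P : {set T}) : Prop :=
  exists M : {set {set T}},
    (forall m, m \in M ->
       exists u v, [/\ g u v, u \in P, v \in P & m = [set u; v]]) /\
    (forall v, v \in P -> #|[set m in M | v \in m]| = 1).

Definition paired_dominating (g : rel T) (P : {set T}) : Prop :=
  dominating g P /\ induced_perfect_matching g P.

Definition DPDP (g : rel T) : Prop :=
  exists D P : {set T},
    [/\ [disjoint D & P], D :|: P = setT, dominating g D & paired_dominating g P].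

(* minimal: no proper spanning subgraph (a symmetric subrelation missing
   at least one edge) is a DPDP-graph *)
Definition minimal_DPDP (g : rel T) : Prop :=
  DPDP g /\
  forall g' : rel T, (forall u v, g' u v -> g u v) -> symmetric g' ->
    (exists u v, g u v && ~~ g' u v) -> ~ DPDP g'.
End SimpleGraph.

(* A multigraph H: vertex type V, edge type E, and for each edge e its two
   ends endpt e false, endpt e true (equal for a loop). *)
Section MultiGraph.
Variables (V E : finType) (endpt : E -> bool -> V).

(* degree: number of edge-ends at v (a loop counts twice) *)
Definition mdeg (v : V) : nat := #|[set p : E * bool | endpt p.1 p.2 == v]|.
Definition mleaf (v : V) : bool := mdeg v == 1.
Definition mnbhd (v : V) : {set V} :=
  [set u | [exists p : E * bool, (endpt p.1 p.2 == v) && (endpt p.1 (~~ p.2) == u)]].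

Variable alpha : V -> nat.

(* raw vertices: original vertices, leaf copies (v,i) (i < alpha v),
   and the edge-vertices (e,b) = the new vertex of e next to its end b *)
Definition S2raw : finType := ((V + {v : V & 'I_(alpha v)}) + (E * bool))%type.

Definition inS2 (x : S2raw) : bool :=
  match x with
  | inl (inl v) => ~~ mleaf v
  | inl (inr w) => mleaf (tag w)
  | inr _ => true
  end.

Definition S2adj0 (x y : S2raw) : bool :=
  match x, y with
  | inr (e, b), inr (e', b') => (e == e') && (b != b')
  | inl (inl v), inr (e, b) => endpt e b == v
  | inl (inr w), inr (e, b) => endpt e b == tag w
  | _, _ => false
  end.

Definition S2adj (x y : S2raw) : bool := S2adj0 x y || S2adj0 y x.

Definition S2V : finType := {x : S2raw | inS2 x}.

Definition S2 : rel S2V := fun x y => S2adj (val x) (val y).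
End MultiGraph.
Arguments S2 {V E} endpt alpha : rename.
Arguments S2V {V E} endpt alpha.
Arguments mdeg {V E} endpt v.
Arguments mnbhd {V E} endpt v.
Arguments mleaf {V E} endpt v.

(* Main.v *)
Require Import Defs.
From HB Require Import structures.
From mathcomp Require Import all_boot.
Set Implicit Arguments. Unset Strict Implicit.

Lemma ipm_invol (T : finType) (g : rel T) (P : {set T}) (f : T -> T) :
  (forall v, v \in P -> [/\ f v \in P, f (f v) = v & g v (f v)]) ->
  induced_perfect_matching g P.
Proof.
move=> H; exists [set [set v; f v] | v in P]; split.
  move=> m /imsetP [v vP ->]; have [H1 _ H3] := H v vP.
  by exists v, (f v).
move=> v vP; have [H1 H2 H3] := H v vP.
suff -> : [set m in [set [set v0; f v0] | v0 in P] | v \in m] = [set [set v; f v]].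
  by rewrite cards1.
apply/setP => m; rewrite !inE; apply/andP/eqP.
  case=> /imsetP [u uP ->]; rewrite !inE => /orP [/eqP -> | /eqP Hv] //.
  have [_ Hu _] := H u uP.
  by rewrite Hv Hu setUC.
by move=> ->; split; [apply/imsetP; exists v | rewrite !inE eqxx].
Qed.

Ltac distH X := let E1 := fresh "X" in let E2 := fresh "X" in
  have E1 := f_equal (fun p => endpt p.1 p.2) X;
  have E2 := f_equal (fun p => endpt p.1 (~~ p.2)) X;
  simpl in E1, E2; rewrite ?negbK in E1 E2; congruence.

Section Main.
Variables (V E : finType) (endpt : E -> bool -> V) (alpha : V -> nat).
Hypothesis Hdeg : forall v, 0 < mdeg endpt v.
Hypothesis Halpha : forall v, mleaf endpt v -> 0 < alpha v.

Definition mkE (p : E * bool) : S2V endpt alpha :=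
  @exist (S2raw E alpha) (@inS2 V E endpt alpha) (inr p) isT.

Lemma adjEE p q : S2adj endpt (alpha:=alpha) (inr p) (inr q) = (p.1 == q.1) && (p.2 != q.2).
Proof. by case: p q => [e b] [e' b']; rewrite /S2adj /= orb_idr // => /andP [/eqP -> ]; rewrite eqxx eq_sym. Qed.
Lemma adjVE v p : S2adj endpt (alpha:=alpha) (inl (inl v)) (inr p) = (endpt p.1 p.2 == v).
Proof. by case: p => [e b]; rewrite /S2adj /= orbF. Qed.
Lemma adjEV v p : S2adj endpt (alpha:=alpha) (inr p) (inl (inl v)) = (endpt p.1 p.2 == v).
Proof. by case: p => [e b]; rewrite /S2adj /=. Qed.
Lemma adjWE w p : S2adj endpt (alpha:=alpha) (inl (inr w)) (inr p) = (endpt p.1 p.2 == tag w).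
Proof. by case: p => [e b]; rewrite /S2adj /= orbF. Qed.
Lemma adjEW w p : S2adj endpt (alpha:=alpha) (inr p) (inl (inr w)) = (endpt p.1 p.2 == tag w).
Proof. by case: p => [e b]; rewrite /S2adj /=. Qed.
Lemma S2sym : symmetric (S2 endpt alpha).
Proof. by move=> u v; rewrite /S2 /S2adj orbC. Qed.

Lemma attach p : exists u : S2V endpt alpha, S2 endpt alpha u (mkE p) /\
  ((exists w, val u = inl (inr w)) \/ val u = inl (inl (endpt p.1 p.2))).
Proof.
case Hl: (mleaf endpt (endpt p.1 p.2)).
  have Ha := Halpha Hl.
  exists (@exist (S2raw E alpha) (@inS2 V E endpt alpha)
     (inl (inr (existT _ (endpt p.1 p.2) (Ordinal Ha)))) Hl).
  by split; [rewrite /S2 /= adjWE | left; eexists].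
exists (@exist (S2raw E alpha) (@inS2 V E endpt alpha) (inl (inl (endpt p.1 p.2))) (negbT Hl)).
by split; [rewrite /S2 /= adjVE | right].
Qed.

Lemma endexists v : exists p : E * bool, endpt p.1 p.2 = v.
Proof.
have := Hdeg v; rewrite /mdeg => /card_gt0P [p]; rewrite inE => /eqP <-.
by exists p.
Qed.

Definition isl (r : S2raw E alpha) : bool := if r is inl _ then true else false.

Lemma part1 : DPDP (S2 endpt alpha).
Proof.
exists [set u | isl (val u)], [set u | ~~ isl (val u)]; split.
- by rewrite disjoint_subset; apply/subsetP => u; rewrite !inE => ->.
- by apply/setP => u; rewrite !inE orbN.
- case=> [[r|p] Hr]; rewrite inE //= => _.
  have [u [Hu Hu']] := attach p; exists u; last by rewrite S2sym.
  by rewrite inE; case: Hu' => [[w ->]|->].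
split.
- case=> [[[v|w]|p] Hr]; rewrite inE //= => _.
    have [p Hp] := endexists v; exists (mkE p); first by rewrite inE.
    by rewrite /S2 /= adjVE Hp.
  have [p Hp] := endexists (tag w); exists (mkE p); first by rewrite inE.
  by rewrite /S2 /= adjWE Hp.
apply: (@ipm_invol _ _ _ (fun u => if val u is inr p then mkE (p.1, ~~ p.2) else u)).
case=> [[r|p] Hr]; rewrite inE //= => _.
split.
- by rewrite inE.
- by apply/val_inj => /=; rewrite negbK; case: p {Hr}.
- by rewrite /S2 /= adjEE eqxx /=; case: (p.2).
Qed.

Lemma oppE2 (p q : E * bool) : ((p.1, ~~ p.2) == (q.1, ~~ q.2)) = (p == q).
Proof. by case: p q => [e1 b1] [e2 b2]; rewrite !xpair_eqE /=; case: b1; case: b2. Qed.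
Lemma oppE (p q : E * bool) : ((p.1, ~~ p.2) == q) = (p == (q.1, ~~ q.2)).
Proof. by case: p q => [e1 b1] [e2 b2]; rewrite !xpair_eqE /=; case: b1; case: b2. Qed.

Section Part2.
Variables (x y x' y' : V) (b c f : E * bool).
Hypotheses (Hb1 : endpt b.1 b.2 = x) (Hb2 : endpt b.1 (~~ b.2) = x')
  (Hc1 : endpt c.1 c.2 = x) (Hc2 : endpt c.1 (~~ c.2) = y)
  (Hf1 : endpt f.1 f.2 = y) (Hf2 : endpt f.1 (~~ f.2) = y').
Hypotheses (Hxy : x <> y) (Hxx' : x <> x') (Hyy' : y <> y') (Hx'y : x' <> y) (Hy'x : y' <> x).
Hypotheses (Hendx : forall p, endpt p.1 p.2 = x -> p = b \/ p = c)
  (Hendy : forall p, endpt p.1 p.2 = y -> p = (c.1, ~~ c.2) \/ p = f).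
Hypotheses (Hlx : ~~ mleaf endpt x) (Hly : ~~ mleaf endpt y)
  (Hlx' : ~~ mleaf endpt x') (Hly' : ~~ mleaf endpt y').
Hypotheses (Hhx : exists p, [/\ endpt p.1 p.2 = x', endpt p.1 (~~ p.2) <> x & endpt p.1 (~~ p.2) <> y])
  (Hhy : exists p, [/\ endpt p.1 p.2 = y', endpt p.1 (~~ p.2) <> x & endpt p.1 (~~ p.2) <> y]).

Ltac dist := let X := fresh "X" in let E1 := fresh "X" in let E2 := fresh "X" in
  apply/eqP => X;
  have E1 := f_equal (fun p : E * bool => endpt p.1 p.2) X;
  have E2 := f_equal (fun p : E * bool => endpt p.1 (~~ p.2)) X;
  simpl in E1, E2; rewrite ?negbK in E1 E2; congruence.
Ltac dist2 := let X := fresh "X" in let E1 := fresh "X" in let E2 := fresh "X" in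
  move=> X;
  have E1 := f_equal (fun p : E * bool => endpt p.1 p.2) X;
  have E2 := f_equal (fun p : E * bool => endpt p.1 (~~ p.2)) X;
  simpl in E1, E2; rewrite ?negbK in E1 E2; congruence.

Definition spec := [:: (b.1, ~~ b.2); c; (c.1, ~~ c.2); (f.1, ~~ f.2)].

Definition inD (r : S2raw E alpha) : bool :=
  match r with
  | inl (inl v) => (v != x) && (v != y)
  | inl (inr _) => true
  | inr p => p \in spec
  end.

Definition cut (r s : S2raw E alpha) : bool :=
  match r, s with
  | inr p, inr q => ((p == c) && (q == (c.1, ~~ c.2))) || ((p == (c.1, ~~ c.2)) && (q == c))
  | _, _ => false
  end.

Definition g' : rel (S2V endpt alpha) := fun u v => S2 endpt alpha u v && ~~ cut (val u) (val v).

Lemma notspec1 p : endpt p.1 p.2 <> x -> endpt p.1 p.2 <> y ->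
  endpt p.1 (~~ p.2) <> x -> endpt p.1 (~~ p.2) <> y -> p \notin spec.
Proof.
move=> H1 H2 H3 H4; rewrite !inE; apply/negP; case/or4P => /eqP E0; subst p;
  simpl in *; rewrite ?negbK in H1 H2 H3 H4; congruence.
Qed.

Lemma notspec2 p : endpt p.1 p.2 <> x -> endpt p.1 p.2 <> y ->
  endpt p.1 p.2 <> x' -> endpt p.1 p.2 <> y' -> p \notin spec.
Proof.
move=> H1 H2 H3 H4; rewrite !inE; apply/negP; case/or4P => /eqP E0; subst p;
  simpl in *; rewrite ?negbK in H1 H2 H3 H4; congruence.
Qed.

Lemma part2 : DPDP g'.
Proof.
have bs : b \notin spec by rewrite !inE; apply/negP; case/or4P => /eqP; dist2.
have fs : f \notin spec by rewrite !inE; apply/negP; case/or4P => /eqP; dist2.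
have bc : (b == c) = false by dist.
have bc' : (b == (c.1, ~~ c.2)) = false by dist.
have fc : (f == c) = false by dist.
have fc' : (f == (c.1, ~~ c.2)) = false by dist.
have fb : (f == b) = false by dist.
have ac : ((b.1, ~~ b.2) == c) = false by dist.
have ac' : ((b.1, ~~ b.2) == (c.1, ~~ c.2)) = false by dist.
have gc : ((f.1, ~~ f.2) == c) = false by dist.
have gc' : ((f.1, ~~ f.2) == (c.1, ~~ c.2)) = false by dist.
have Hyx : (y == x) = false by apply/eqP; congruence.
pose mkVx := @exist (S2raw E alpha) (@inS2 V E endpt alpha) (inl (inl x)) Hlx.
pose mkVy := @exist (S2raw E alpha) (@inS2 V E endpt alpha) (inl (inl y)) Hly.
exists [set u | inD (val u)], [set u | ~~ inD (val u)]; split.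
- by rewrite disjoint_subset; apply/subsetP => u; rewrite !inE => ->.
- by apply/setP => u; rewrite !inE orbN.
- case=> [[[v|w]|p] Hr]; rewrite inE /= => Hn //.
    rewrite negb_and !negbK in Hn; case/orP: Hn => /eqP ?; subst v.
      exists (mkE c); first by rewrite inE /= !inE eqxx !orbT.
      by rewrite /g' /S2 /= adjVE Hc1 eqxx.
    exists (mkE (c.1, ~~ c.2)); first by rewrite inE /= !inE eqxx !orbT.
    by rewrite /g' /S2 /= adjVE Hc2 eqxx.
  case: (p =P b) => [->|Hpb].
    exists (mkE (b.1, ~~ b.2)); first by rewrite inE /= !inE eqxx.
    by rewrite /g' /S2 /= adjEE /= eqxx bc bc' /=; case: (b.2).
  case: (p =P f) => [->|Hpf].
    exists (mkE (f.1, ~~ f.2)); first by rewrite inE /= !inE eqxx !orbT.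
    by rewrite /g' /S2 /= adjEE /= eqxx fc fc' /=; case: (f.2).
  have Hpx : endpt p.1 p.2 <> x.
    move=> /Hendx [//|E0]; by rewrite E0 !inE eqxx orbT in Hn.
  have Hpy : endpt p.1 p.2 <> y.
    move=> /Hendy [E0|//]; by rewrite E0 !inE eqxx !orbT in Hn.
  have [u [Hu Hu']] := attach p; exists u.
    by rewrite inE; case: Hu' => [[w ->]|->] //=; apply/andP; split; apply/eqP.
  move: Hu; rewrite /g' /S2 /= /S2adj orbC => ->; by case: Hu' => [[w ->]|->].
split.
- case=> [[[v|w]|p] Hr]; rewrite inE /= ?negbK => Hn //.
  + move/andP: Hn => [/eqP Hvx /eqP Hvy].
    have [p [Hp Hps]] : exists p, endpt p.1 p.2 = v /\ p \notin spec.
      case: (v =P x') => [-> | Hvx'].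
        have [p [H1 H2 H3]] := Hhx; exists p; split => //.
        by apply: notspec1 => //; congruence.
      case: (v =P y') => [-> | Hvy'].
        have [p [H1 H2 H3]] := Hhy; exists p; split => //.
        by apply: notspec1 => //; congruence.
      have [p Hp] := endexists v; exists p; split => //.
      by apply: notspec2; congruence.
    exists (mkE p); first by rewrite inE /= Hps.
    by rewrite /g' /S2 /= adjVE Hp eqxx.
  + have Hr' : mleaf endpt (tag w) := Hr.
    have Hv : forall z, ~~ mleaf endpt z -> tag w <> z.
      by move=> z Hz E0; rewrite -E0 Hr' in Hz.
    have [p Hp] := endexists (tag w).
    have Hps : p \notin spec.
      apply: notspec2; rewrite Hp; apply: Hv => //.
    exists (mkE p); first by rewrite inE /= Hps.
    by rewrite /g' /S2 /= adjWE Hp eqxx.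
  + rewrite !inE in Hn; case/or4P: Hn => /eqP ->.
    * exists (mkE b); first by rewrite inE /= bs.
      by rewrite /g' /S2 /= adjEE /= eqxx ac ac' /=; case: (b.2).
    * exists mkVx; first by rewrite inE /= eqxx.
      by rewrite /g' /S2 /= adjEV Hc1 eqxx.
    * exists mkVy; first by rewrite inE /= eqxx andbF.
      by rewrite /g' /S2 /= adjEV Hc2 eqxx.
    * exists (mkE f); first by rewrite inE /= fs.
      by rewrite /g' /S2 /= adjEE /= eqxx gc gc' /=; case: (f.2).
apply: (@ipm_invol _ _ _ (fun u => match val u with
  | inl (inl v) => if v == x then mkE b else if v == y then mkE f else u
  | inl (inr _) => u
  | inr p => if p == b then mkVx else if p == f then mkVy else mkE (p.1, ~~ p.2)
  end)).
case=> [[[v|w]|p] Hr]; rewrite inE /= => Hn //.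
  rewrite negb_and !negbK in Hn; case/orP: Hn => /eqP ?; subst v.
    rewrite eqxx /=; split.
    - by rewrite inE /= bs.
    - by rewrite eqxx; apply/val_inj.
    - by rewrite /g' /S2 /= adjVE Hb1 eqxx.
  rewrite Hyx eqxx /=; split.
  - by rewrite inE /= fs.
  - by rewrite fb eqxx; apply/val_inj.
  - by rewrite /g' /S2 /= adjVE Hf1 eqxx.
case: (p =P b) => [->|Hpb].
  split.
  - by rewrite inE /= eqxx.
  - by rewrite /= eqxx; apply/val_inj.
  - by rewrite /g' /S2 /= adjEV Hb1 eqxx.
case: (p =P f) => [->|Hpf].
  split.
  - by rewrite inE /= eqxx andbF.
  - by rewrite /= Hyx eqxx; apply/val_inj.
  - by rewrite /g' /S2 /= adjEV Hf1 eqxx.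
move: Hn; rewrite !inE => /norP [Hn1 /norP [Hn2 /norP [Hn3 Hn4]]].
have ob : ((p.1, ~~ p.2) == b) = false by rewrite oppE; apply/negbTE.
have of' : ((p.1, ~~ p.2) == f) = false by rewrite oppE; apply/negbTE.
split.
- rewrite /= !inE !oppE2 oppE; apply/negP; case/or4P => /eqP E0.
  + exact: Hpb.
  + by rewrite E0 eqxx in Hn3.
  + by rewrite E0 eqxx in Hn2.
  + exact: Hpf.
- by rewrite /= ob of'; apply/val_inj => /=; rewrite negbK; case: (p) {Hr Hn1 Hn2 Hn3 Hn4 Hpb Hpf ob of'}.
- rewrite /g' /S2 /= adjEE /= eqxx (negbTE Hn2) (negbTE Hn3) /=; by case: (p.2).
Qed.

Lemma notmin : ~ minimal_DPDP (S2 endpt alpha).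
Proof.
case=> _ H; apply: (H g') part2.
- by move=> u v /andP [].
- move=> u v; rewrite /g' S2sym; congr (_ && ~~ _).
  case: u v => [[r|p] ?] [[s|q] ?] //=.
  by case: (p == c); case: (q == c); case: (p == (c.1, ~~ c.2)); case: (q == (c.1, ~~ c.2)).
- exists (mkE c), (mkE (c.1, ~~ c.2)).
  by rewrite /g' /S2 /= adjEE /= !eqxx /=; case: (c.2).
Qed.

End Part2.
End Main.

Lemma nonleaf (V E : finType) (endpt : E -> bool -> V) (v : V) (p q : E * bool) :
  endpt p.1 p.2 = v -> endpt q.1 q.2 = v -> p <> q -> ~~ mleaf endpt v.
Proof.
move=> Hp Hq Hpq; rewrite /mleaf; apply/eqP => H1.
have : [set p; q] \subset [set r : E * bool | endpt r.1 r.2 == v].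
  by apply/subsetP => r; rewrite !inE => /orP [/eqP -> | /eqP ->]; apply/eqP.
move/subset_leq_card; rewrite cards2 -/(mdeg endpt v) H1.
by case: eqP.
Qed.

Theorem proposition4p6 (V E : finType) (endpt : E -> bool -> V)
  (alpha : V -> nat) (x y x' y' : V) :
  (forall v, 0 < mdeg endpt v) ->
  (forall v, mleaf endpt v -> 0 < alpha v) ->
  y \in mnbhd endpt x ->
  mdeg endpt x = 2 -> mdeg endpt y = 2 ->
  mnbhd endpt x :\ y = [set x'] ->
  mnbhd endpt y :\ x = [set y'] ->
  mnbhd endpt x' :\: [set x; y] != set0 ->
  mnbhd endpt y' :\: [set x; y] != set0 ->
  DPDP (S2 endpt alpha) /\ ~ minimal_DPDP (S2 endpt alpha).
Proof.
move=> Hdeg Halpha Hy Hdx Hdy Hx' Hy' Hnx Hny.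
split; first exact: part1.
have [c /andP [/eqP Hc1 /eqP Hc2]] : exists p : E * bool,
    (endpt p.1 p.2 == x) && (endpt p.1 (~~ p.2) == y).
  by move: Hy; rewrite inE => /existsP.
have : x' \in mnbhd endpt x :\ y by rewrite Hx' set11.
rewrite !inE => /andP [/eqP Hx'y /existsP [b /andP [/eqP Hb1 /eqP Hb2]]].
have : y' \in mnbhd endpt y :\ x by rewrite Hy' set11.
rewrite !inE => /andP [/eqP Hy'x /existsP [f /andP [/eqP Hf1 /eqP Hf2]]].
have Hbc : b != c by apply/eqP => X; distH X.
have Ex : [set p : E * bool | endpt p.1 p.2 == x] = [set b; c].
  apply/eqP; rewrite eq_sym eqEcard; apply/andP; split.
    by apply/subsetP => p; rewrite !inE => /orP [/eqP -> | /eqP ->]; apply/eqP.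
  by rewrite cards2 Hbc -/(mdeg endpt x) Hdx.
have Hendx : forall p, endpt p.1 p.2 = x -> p = b \/ p = c.
  move=> p Hp; have : p \in [set p : E * bool | endpt p.1 p.2 == x] by rewrite inE Hp.
  by rewrite Ex !inE => /orP [/eqP|/eqP]; auto.
have Hxy : x <> y.
  move=> E0; have := Hendx (c.1, ~~ c.2); rewrite /= Hc2 -E0 => /(_ erefl) [X|X];
    [distH X | by move/(f_equal snd): X => /=; case: (c.2)].
have Hxx' : x <> x'.
  move=> E0; have := Hendx (b.1, ~~ b.2); rewrite /= Hb2 -E0 => /(_ erefl) [X|X];
    try (by move/(f_equal snd): X => /=; case: (b.2)); distH X.
have Hdf : (c.1, ~~ c.2) != f by apply/eqP => X; distH X.
have Ey : [set p : E * bool | endpt p.1 p.2 == y] = [set (c.1, ~~ c.2); f].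
  apply/eqP; rewrite eq_sym eqEcard; apply/andP; split.
    by apply/subsetP => p; rewrite !inE => /orP [/eqP -> | /eqP ->]; apply/eqP.
  by rewrite cards2 Hdf -/(mdeg endpt y) Hdy.
have Hendy : forall p, endpt p.1 p.2 = y -> p = (c.1, ~~ c.2) \/ p = f.
  move=> p Hp; have : p \in [set p : E * bool | endpt p.1 p.2 == y] by rewrite inE Hp.
  by rewrite Ey !inE => /orP [/eqP|/eqP]; auto.
have Hyy' : y <> y'.
  move=> E0; have := Hendy (f.1, ~~ f.2); rewrite /= Hf2 -E0 => /(_ erefl) [X|X];
    try (by move/(f_equal snd): X => /=; case: (f.2)); distH X.
have Hlx : ~~ mleaf endpt x by rewrite /mleaf Hdx.
have Hly : ~~ mleaf endpt y by rewrite /mleaf Hdy.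
have [hx [Hhx1 Hhx2 Hhx3]] : exists p, [/\ endpt p.1 p.2 = x',
    endpt p.1 (~~ p.2) <> x & endpt p.1 (~~ p.2) <> y].
  case/set0Pn: Hnx => u; rewrite !inE => /andP [Hu /existsP [h /andP [/eqP H1 /eqP H2]]].
  by exists h; split => //; move=> E0; rewrite -H2 E0 eqxx ?orbT in Hu.
have [hy [Hhy1 Hhy2 Hhy3]] : exists p, [/\ endpt p.1 p.2 = y',
    endpt p.1 (~~ p.2) <> x & endpt p.1 (~~ p.2) <> y].
  case/set0Pn: Hny => u; rewrite !inE => /andP [Hu /existsP [h /andP [/eqP H1 /eqP H2]]].
  by exists h; split => //; move=> E0; rewrite -H2 E0 eqxx ?orbT in Hu.
have Hlx' : ~~ mleaf endpt x'.
  by apply: (@nonleaf _ _ _ _ (b.1, ~~ b.2) hx) => // X; distH X.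
have Hly' : ~~ mleaf endpt y'.
  by apply: (@nonleaf _ _ _ _ (f.1, ~~ f.2) hy) => // X; distH X.
apply: (@notmin V E endpt alpha Hdeg Halpha x y x' y' b c f) => //.
- by exists hx.
- by exists hy.
Qed.
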